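(* Let $p$ be a full-support skill distribution and $q$ a full-support perception with $p\succsim_{LR}q$ (the population is under-perceived). Let $\langle S',\pi'\rangle\succsim_G\langle S,\pi\rangle$ be signal structures with $\langle S',\pi'\rangle$ MLR. Then for every monotone firm $A\subset\mathcal{A}_M$, $$W_A(p,q,\langle S',\pi'\rangle)\ \ge\ W_A(p,q,\langle S,\pi\rangle).$$
   Context: Let $\Theta\subset\mathbb{R}$ be a finite set of skill types with $|\Theta|\ge2$. Tasks are vectors $a\in\mathcal{A}:=\mathbb{R}^\Theta$. A firm is a non-empty finite set $A\subset\mathcal{A}$. It is monotone if $A\subset\mathcal{A}_M:=\{a: a(\theta')>a(\theta)\text{ whenever }\theta'>\theta\}$. A signal structure $\langle S,\pi\rangle$ consists of a non-empty finite set $S$ and a map $\pi:S\times\Theta\to[0,1]$ with $\sum_s\pi(s|\theta)=1$, such that each $s$ has $\pi(s|\theta)>0$ for some $\theta$. Pay: - $p,q\in\Delta(\Theta)$ have full support. - $q_{\langle S,\pi\rangle}(\theta|s):=q(\theta)\pi(s|\theta)/\sum_{\theta'}q(\theta')\pi(s|\theta')$. - $w_A(s,q,\langle S,\pi\rangle):=\max_{a\in A}\sum_\theta q_{\langle S,\pi\rangle}(\theta|s)a(\theta)$. - $W_A(p,q,\langle S,\pi\rangle):=\sum_\theta p(\theta)\sum_s\pi(s|\theta)w_A(s,q,\langle S,\pi\rangle)$. Orders: - $q'\succsim_{LR}q$ means $q(\theta)q'(\theta')\ge q(\theta')q'(\theta)$ whenever $\theta'>\theta$. - $\langle S',\pi'\rangle\succsim_G\langle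 S,\pi\rangle$ means there exists $g:S\times S'\to[0,1]$ with $\sum_s g(s|s')=1$ for each $s'$ and $\pi(s|\theta)=\sum_{s'}g(s|s')\pi'(s'|\theta)$ for all $s,\theta$. - $\langle S,\pi\rangle$ is MLR if $S\subset\mathbb{R}$ and $\pi(s|\theta)\pi(s'|\theta')\ge\pi(s|\theta')\pi(s'|\theta)$ whenever $s'>s$, $\theta'>\theta$. *)

(* Defs.v *)
From HB Require Import structures.
From mathcomp Require Import all_boot all_order all_algebra.
From mathcomp Require Import reals.
Set Implicit Arguments. Unset Strict Implicit. Unset Printing Implicit Defensive.
Import Order.TTheory GRing.Theory Num.Theory.
Local Open Scope ring_scope.

(* Skill types: a finite set Θ ⊂ ℝ is represented by a finType T together
   with an injective embedding th : T -> R (the real value of each type).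
   The order on Θ is the order of the embedded values. *)
Definition skill_types (R : realType) (T : finType) (th : T -> R) : Prop :=
  injective th /\ (2 <= #|T|)%N.

(* tasks a ∈ ℝ^Θ are {ffun T -> R}; a firm is a non-empty finite set of tasks,
   represented by a non-empty list (duplicates are irrelevant). *)
Definition firm (R : realType) (T : finType) (A : seq {ffun T -> R}) : Prop :=
  A <> [::].

Definition monotone_task (R : realType) (T : finType) (th : T -> R)
  (a : {ffun T -> R}) : Prop :=
  forall t t' : T, th t < th t' -> a t < a t'.

Definition monotone_firm (R : realType) (T : finType) (th : T -> R)
  (A : seq {ffun T -> R}) : Prop :=
  forall a, a \in A -> monotone_task th a.

Definition full_support_dist (R : realType) (T : finType) (p : T -> R) : Prop :=
  (forall t, 0 < p t) /\ \sum_(t : T) p t = 1.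

(* signal structure <S, pi>, pi s t = π(s|θ) *)
Definition signal_structure (R : realType) (T S : finType) (pi : S -> T -> R) : Prop :=
  (0 < #|S|)%N /\
  (forall s t, 0 <= pi s t <= 1) /\
  (forall t, \sum_(s : S) pi s t = 1) /\
  (forall s, exists t, 0 < pi s t).

Definition posterior (R : realType) (T S : finType) (q : T -> R) (pi : S -> T -> R)
  (s : S) (t : T) : R :=
  q t * pi s t / \sum_(t' : T) q t' * pi s t'.

Definition task_value (R : realType) (T S : finType) (q : T -> R) (pi : S -> T -> R)
  (s : S) (a : {ffun T -> R}) : R :=
  \sum_(t : T) posterior q pi s t * a t.

(* w_A(s,q,<S,pi>) = max_{a ∈ A} ... (A non-empty; value 0 for empty A is never used) *)
Definition wage (R : realType) (T S : finType) (A : seq {ffun T -> R})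
  (q : T -> R) (pi : S -> T -> R) (s : S) : R :=
  match A with
  | [::] => 0
  | a0 :: _ => \big[Num.max/task_value q pi s a0]_(a <- A) task_value q pi s a
  end.

Definition total_wage (R : realType) (T S : finType) (A : seq {ffun T -> R})
  (p q : T -> R) (pi : S -> T -> R) : R :=
  \sum_(t : T) p t * \sum_(s : S) pi s t * wage A q pi s.

Definition LR_ge (R : realType) (T : finType) (th : T -> R) (q' q : T -> R) : Prop :=
  forall t t' : T, th t' > th t -> q t * q' t' >= q t' * q' t.

Definition garbling_ge (R : realType) (T S' S : finType)
  (pi' : S' -> T -> R) (pi : S -> T -> R) : Prop :=
  exists g : S -> S' -> R,
    (forall s s', 0 <= g s s' <= 1) /\
    (forall s', \sum_(s : S) g s s' = 1) /\
    (forall s t, pi s t = \sum_(s' : S') g s s' * pi' s' t).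

(* MLR signal structure: S ⊂ ℝ is represented by an injective embedding sg *)
Definition MLR (R : realType) (T S : finType) (th : T -> R) (sg : S -> R)
  (pi : S -> T -> R) : Prop :=
  injective sg /\
  forall s s' t t', sg s' > sg s -> th t' > th t ->
    pi s t * pi s' t' >= pi s t' * pi s' t.

(* Main.v *)
Require Import Defs.
From HB Require Import structures.
From mathcomp Require Import all_boot all_order all_algebra.
From mathcomp Require Import reals ring lra.
Import Order.TTheory GRing.Theory Num.Theory.
Local Open Scope ring_scope.

Section H.
Variable R : realType.

Lemma sym_ge0 (I : finType) (H : I -> I -> R) :
  (forall i j, 0 <= H i j + H j i) -> 0 <= \sum_i \sum_j H i j.
Proof.
move=> hH.
have E : \sum_i \sum_j H i j = \sum_i \sum_j H j i := exchange_big _ _ _ _ _ _.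
have : 0 <= \sum_i \sum_j (H i j + H j i).
  by apply: sumr_ge0 => i _; apply: sumr_ge0 => j _; apply: hH.
have -> : \sum_i \sum_j (H i j + H j i) = \sum_i \sum_j H i j + \sum_i \sum_j H j i.
  by rewrite -big_split /=; apply: eq_bigr => i _; rewrite big_split.
rewrite -E; lra.
Qed.

Lemma bigmax_ge (X : eqType) (f : X -> R) x0 (l : seq X) y :
  y \in l -> f y <= \big[Num.max/x0]_(a <- l) f a.
Proof.
elim: l => [|b l IH] //; rewrite in_cons big_cons.
set m := \big[Num.max/x0]_(j <- l) f j.
move=> /orP [/eqP->|/IH h].
  by case: (lerP (f b) m) => h.
case: (lerP (f b) m) => h1 //; exact: le_trans h (ltW h1).
Qed.

Lemma bigmax_att (X : eqType) (f : X -> R) x0 (l : seq X) :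
  \big[Num.max/x0]_(a <- l) f a = x0 \/
  exists2 y, y \in l & \big[Num.max/x0]_(a <- l) f a = f y.
Proof.
elim: l => [|b l IH]; first by rewrite big_nil; left.
rewrite big_cons; case: lerP => h.
  case: IH => [->|[y yl ->]]; first by left.
  by right; exists y => //; rewrite in_cons yl orbT.
right; exists b => //; exact: mem_head.
Qed.

Lemma wage_ge (T S : finType) (A : seq {ffun T -> R}) q (pi : S -> T -> R) s a :
  a \in A -> task_value q pi s a <= wage A q pi s.
Proof. by case: A => [|a0 A] //= h; apply: bigmax_ge. Qed.

Lemma wage_att (T S : finType) (A : seq {ffun T -> R}) q (pi : S -> T -> R) s :
  A <> [::] -> exists2 a, a \in A & wage A q pi s = task_value q pi s a.
Proof.
case: A => [|a0 A] // _ /=.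
case: (bigmax_att _ (task_value q pi s) (task_value q pi s a0) (a0 :: A)) => [->|]; last by [].
by exists a0; rewrite ?mem_head.
Qed.

Lemma tv_eq (T S : finType) q (pi : S -> T -> R) s (a : {ffun T -> R}) :
  task_value q pi s a = (\sum_t q t * a t * pi s t) / \sum_t q t * pi s t.
Proof.
rewrite /task_value /posterior mulr_suml; apply: eq_bigr => t _.
by ring.
Qed.

Lemma div_le (x y a b : R) : 0 < a -> 0 < b -> x * b <= y * a -> x / a <= y / b.
Proof. by move=> ha hb h; rewrite ler_pdivrMr // mulrAC ler_pdivlMr. Qed.


Lemma mix (T S S' : finType) (pi : S -> T -> R) (pi' : S' -> T -> R) (g : S -> S' -> R)
  (hg : forall s t, pi s t = \sum_s' g s s' * pi' s' t) (r : T -> R) s :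
  \sum_t r t * pi s t = \sum_u g s u * \sum_t r t * pi' u t.
Proof.
under eq_bigr do rewrite hg mulr_sumr.
rewrite exchange_big; apply: eq_bigr => u _; rewrite mulr_sumr.
by apply: eq_bigr => t _; ring.
Qed.

Lemma total_wage_eq (T S : finType) (A : seq {ffun T -> R}) (p q : T -> R) (pi : S -> T -> R) :
  total_wage A p q pi = \sum_s (\sum_t p t * pi s t) * wage A q pi s.
Proof.
rewrite /total_wage; under eq_bigr do rewrite mulr_sumr.
rewrite exchange_big; apply: eq_bigr => s _; rewrite mulr_suml.
by apply: eq_bigr => t _; ring.
Qed.

Lemma sum_pos (T S : finType) (q : T -> R) (pi : S -> T -> R) s :
  (forall t, 0 < q t) -> (forall s t, 0 <= pi s t <= 1) -> (forall s, exists t, 0 < pi s t) ->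
  0 < \sum_t q t * pi s t.
Proof.
move=> hq h01 hpos; have [t0 ht0] := hpos s.
rewrite (bigD1 t0) //=.
have h1 : 0 < q t0 * pi s t0 by rewrite mulr_gt0.
have h2 : 0 <= \sum_(t | t != t0) q t * pi s t.
  apply: sumr_ge0 => t _; apply: mulr_ge0; [exact: ltW | by case/andP: (h01 s t)].
lra.
Qed.

Lemma cross (T S' : finType) (th : T -> R) (pi' : S' -> T -> R) (r1 r2 : T -> R) u v :
  injective th ->
  (forall t t', th t < th t' -> r1 t * r2 t' <= r1 t' * r2 t) ->
  (forall t t', th t < th t' -> pi' u t' * pi' v t <= pi' u t * pi' v t') ->
  (\sum_t r1 t * pi' u t) * (\sum_t r2 t * pi' v t) <=
  (\sum_t r1 t * pi' v t) * (\sum_t r2 t * pi' u t).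
Proof.
move=> thinj hr hpi; rewrite -subr_ge0.
have -> : (\sum_t r1 t * pi' v t) * (\sum_t r2 t * pi' u t) -
   (\sum_t r1 t * pi' u t) * (\sum_t r2 t * pi' v t) =
   \sum_t \sum_t' (r1 t * pi' v t * (r2 t' * pi' u t') - r1 t * pi' u t * (r2 t' * pi' v t')).
  rewrite !big_distrlr -sumrB; apply: eq_bigr => t _; by rewrite -sumrB.
apply: sym_ge0 => t t'.
have -> : r1 t * pi' v t * (r2 t' * pi' u t') - r1 t * pi' u t * (r2 t' * pi' v t') +
  (r1 t' * pi' v t' * (r2 t * pi' u t) - r1 t' * pi' u t' * (r2 t * pi' v t)) =
  (r1 t * r2 t' - r1 t' * r2 t) * (pi' v t * pi' u t' - pi' u t * pi' v t') by ring.
case: (ltgtP (th t) (th t')) => h.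
- apply: mulr_le0; rewrite subr_le0; [exact: hr | ].
  by have := hpi _ _ h; lra.
- apply: mulr_ge0; rewrite subr_ge0; [exact: hr | ].
  by have := hpi _ _ h; lra.
- by rewrite (thinj _ _ h) !subrr mul0r.
Qed.

Lemma cheb (I : finType) (al l w : I -> R) :
  (forall i, 0 <= al i) -> (forall i j, 0 <= (l i - l j) * (w i - w j)) ->
  (\sum_i al i * l i) * (\sum_i al i * w i) <= (\sum_i al i) * (\sum_i al i * l i * w i).
Proof.
move=> ha hc; rewrite -subr_ge0.
have -> : (\sum_i al i) * (\sum_i al i * l i * w i) - (\sum_i al i * l i) * (\sum_i al i * w i) =
  \sum_i \sum_j (al i * (al j * l j * w j) - al i * l i * (al j * w j)).
  rewrite !big_distrlr -sumrB; apply: eq_bigr => t _; by rewrite -sumrB.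
apply: sym_ge0 => i j.
have -> : al i * (al j * l j * w j) - al i * l i * (al j * w j) +
  (al j * (al i * l i * w i) - al j * l j * (al i * w i)) =
  (al i * al j) * ((l i - l j) * (w i - w j)) by ring.
by rewrite mulr_ge0 // mulr_ge0.
Qed.

End H.

Theorem corollary1 (R : realType) (T : finType) (th : T -> R)
  (p q : T -> R) (S S' : finType) (pi : S -> T -> R) (pi' : S' -> T -> R)
  (sg' : S' -> R) :
  skill_types th ->
  full_support_dist p -> full_support_dist q ->
  LR_ge th p q ->
  signal_structure pi -> signal_structure pi' ->
  garbling_ge pi' pi ->
  MLR th sg' pi' ->
  forall A : seq {ffun T -> R}, firm A -> monotone_firm th A ->
    total_wage A p q pi' >= total_wage A p q pi.
Proof.
move=> [thinj _] [pp _] [qp _] LR [_ [pi01 [_ pipos]]] [_ [pi'01 [_ pi'pos]]]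
  [g [g01 [gsum hg]]] [sginj MLRh] A hA hmon.
pose mq' u := \sum_t q t * pi' u t.
pose mp' u := \sum_t p t * pi' u t.
pose w' u := wage A q pi' u.
pose lam u := mp' u / mq' u.
have mq'pos u : 0 < mq' u by apply: sum_pos.
have mp'pos u : 0 < mp' u by apply: sum_pos.
have mqpos s : 0 < \sum_t q t * pi s t by apply: sum_pos.
have g0 s u : 0 <= g s u by case/andP: (g01 s u).
have wmono u v : sg' u < sg' v -> w' u <= w' v.
  move=> huv; rewrite /w'; have [a aA ->] := wage_att _ _ _ _ q pi' u hA.
  apply: le_trans (wage_ge _ _ _ _ q pi' v a aA); rewrite !tv_eq; apply: div_le; [exact: mq'pos | exact: mq'pos |].
  apply: (cross _ _ _ th pi' (fun t => q t * a t) q u v) => // t t' htt.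
    have ha := hmon a aA t t' htt.
    have hq : 0 < q t * q t' by rewrite mulr_gt0.
    nra.
  by apply: MLRh.
have lmono u v : sg' u < sg' v -> lam u <= lam v.
  move=> huv; rewrite /lam; apply: div_le; [exact: mq'pos | exact: mq'pos |].
  apply: (cross _ _ _ th pi' p q u v) => // t t' htt.
    have := LR t t' htt; lra.
  by apply: MLRh.
have comon u v : 0 <= (lam u - lam v) * (w' u - w' v).
  case: (ltgtP (sg' u) (sg' v)) => h.
  - by apply: mulr_le0; rewrite subr_le0; [apply: lmono | apply: wmono].
  - by apply: mulr_ge0; rewrite subr_ge0; [apply: lmono | apply: wmono].
  - by rewrite (sginj _ _ h) !subrr mul0r.
have F2 s : (\sum_t q t * pi s t) * wage A q pi s <= \sum_u g s u * mq' u * w' u.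
  have [a aA ->] := wage_att _ _ _ _ q pi s hA.
  rewrite tv_eq mulrC divfK; last exact: lt0r_neq0.
  rewrite (mix _ _ _ _ _ _ _ hg (fun t => q t * a t)); apply: ler_sum => u _.
  rewrite -mulrA; apply: ler_wpM2l => //.
  have := wage_ge _ _ _ _ q pi' u a aA; rewrite tv_eq ler_pdivrMr; last exact: mq'pos.
  by rewrite [_ * mq' u]mulrC.
have lamE s u : g s u * mp' u = g s u * mq' u * lam u.
  rewrite /lam; field; exact: lt0r_neq0.
rewrite !total_wage_eq.
have -> : \sum_u (\sum_t p t * pi' u t) * wage A q pi' u =
    \sum_s \sum_u g s u * mq' u * lam u * w' u.
  rewrite exchange_big /=; apply: eq_bigr => u _.
  have -> : \sum_s g s u * mq' u * lam u * w' u = (\sum_s g s u) * (mq' u * lam u * w' u).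
    by rewrite mulr_suml; apply: eq_bigr => s _; rewrite !mulrA.
  have hm := lt0r_neq0 (mq'pos u).
  rewrite gsum mul1r /lam /w'; rewrite /mq' in hm *; rewrite /mp'; field; exact: hm.
apply: ler_sum => s _.
have mpE : \sum_t p t * pi s t = \sum_u g s u * mq' u * lam u.
  by rewrite (mix _ _ _ _ _ _ _ hg p); apply: eq_bigr => u _; rewrite -lamE.
have mqE : \sum_t q t * pi s t = \sum_u g s u * mq' u.
  by rewrite (mix _ _ _ _ _ _ _ hg q).
have mps0 : 0 <= \sum_t p t * pi s t by apply: ltW; apply: sum_pos.
have -> : (\sum_t p t * pi s t) * wage A q pi s =
   (\sum_t p t * pi s t) / (\sum_t q t * pi s t) * ((\sum_t q t * pi s t) * wage A q pi s).
  field; exact: lt0r_neq0.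
apply: le_trans (ler_wpM2l _ (F2 s)) _.
  by apply: divr_ge0 => //; apply: ltW.
rewrite mpE mqE mulrAC ler_pdivrMr; last by rewrite -mqE.
rewrite [X in _ <= X]mulrC [X in X <= _]mulrC.
have -> : \sum_u g s u * mq' u * lam u * w' u = \sum_u g s u * mq' u * w' u * lam u.
  by apply: eq_bigr => u _; rewrite mulrAC.
apply: (cheb _ _ (fun u => g s u * mq' u) w' lam).
  by move=> u; apply: mulr_ge0 => //; apply: ltW.
by move=> u v; rewrite mulrC.
Qed.
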